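(* Let $\mathscr{F}$ be a family of languages closed under rational transduction and Kleene closure, and let $S$ be a finitely generated completely simple semigroup. Then the following are equivalent: (i) the loop problem of $S$ (with respect to a finite semigroup choice of generators) belongs to $\mathscr{F}$; (ii) the loop problem of each maximal subgroup of $S$ (with respect to a finite choice of generators) belongs to $\mathscr{F}$; (iii) the word problem of each maximal subgroup of $S$ (with respect to a finite choice of monoid generators) belongs to $\mathscr{F}$.
   Context: Maps are written on the right. $X^*$, $X^+$: free monoid and free semigroup on $X$. A semigroup is completely simple if it has no proper ideals and has a primitive idempotent (idempotent $e$ such that every idempotent $f$ with $ef = fe = f$ equals $e$); maximal subgroups are subsemigroups that are groups under the inherited multiplication and contained in no larger such; in a finitely generated completely simple semigroup they are finitely generated. For a monoid $M$ and surjective morphism $\sigma : X^* \to M$ ($X$ finite), let $\overline{X} = \{\overline{x} : x \in X\}$ be new symbols, $\hat{X} = X \cup \overline{X}$; the loop automaton has vertex set $M$, for each $a \in M$, $x \in X$ an edge $a \to a(x\sigma)$ labelled $x$ and an edge $a(x\sigma) \to a$ labelled $\overline{x}$; the loop problem $L_\sigma(M) \subseteq \hat{X}^*$ is the set of labels of paths from the identity to the identity. For a semigroup $S$ and surjective $\sigma : X^+ \to S$, the loop problem of $S$ is the loop problem of $S^1$ ($S$ with a new identity adjoined even if one exists) with respect to the extension $X^* \to S^1$. The word problem of a group $G$ with respect to a surjective monoid morphism $\sigma : X^* \to G$ is $\{w \in X^* : w\sigma = 1\}$. A rational transduction is a relation $\rho \subseteq X^* \times Z^*$ ($X, Z$ finite)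 accepted by a finite directed graph with edges labelled in $X^* \times Z^*$, an initial vertex and terminal vertices (pairs labelling initial-to-terminal paths); the image of $L$ is $L\rho = \{v : (u,v)\in\rho, u \in L\}$. The Kleene closure of a language is the submonoid of the free monoid it generates. *)

(* Defs.v *)
From mathcomp Require Import all_boot.
Set Implicit Arguments. Unset Strict Implicit. Unset Printing Implicit Defensive.

Definition language (X : finType) := seq X -> Prop.

Definition lang_family := forall X : finType, language X -> Prop.

Inductive trans_acc (X Z Q : finType) (E : seq (Q * seq X * seq Z * Q))
    (fin : pred Q) : Q -> seq X -> seq Z -> Prop :=
  | trans_acc_nil q : fin q -> trans_acc E fin q [::] [::]
  | trans_acc_cons q a b q' u v :
      (q, a, b, q') \in E -> trans_acc E fin q' u v ->
      trans_acc E fin q (a ++ u) (b ++ v).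

Definition rational_transduction (X Z : finType)
    (rho : seq X -> seq Z -> Prop) : Prop :=
  exists (Q : finType) (E : seq (Q * seq X * seq Z * Q)) (q0 : Q) (fin : pred Q),
    forall u v, rho u v <-> trans_acc E fin q0 u v.

Definition trans_image (X Z : finType) (rho : seq X -> seq Z -> Prop)
    (L : language X) : language Z :=
  fun v => exists u, L u /\ rho u v.

Definition closed_under_rational_transduction (F : lang_family) : Prop :=
  forall (X Z : finType) (rho : seq X -> seq Z -> Prop) (L : language X),
    rational_transduction rho -> F X L -> F Z (trans_image rho L).

Definition kleene_star (X : finType) (L : language X) : language X :=
  fun w => exists ws : seq (seq X), (forall u, u \in ws -> L u) /\ flatten ws = w.

Definition closed_under_kleene (F : lang_family) : Prop :=
  forall (X : finType) (L : language X), F X L -> F X (kleene_star L).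

Section Semigroups.
Variables (S : Type) (m : S -> S -> S).

Definition associative_op : Prop := forall a b c, m a (m b c) = m (m a b) c.

Definition is_ideal (I : S -> Prop) : Prop :=
  (exists a, I a) /\ (forall s a, I a -> I (m s a) /\ I (m a s)).

Definition no_proper_ideals : Prop :=
  forall I : S -> Prop, is_ideal I -> forall a, I a.

Definition idempotent (e : S) : Prop := m e e = e.

Definition primitive_idempotent (e : S) : Prop :=
  idempotent e /\
  forall f, idempotent f -> m e f = f -> m f e = f -> f = e.

Definition completely_simple : Prop :=
  no_proper_ideals /\ exists e, primitive_idempotent e.

Definition subgroup_with_id (H : S -> Prop) (e : S) : Prop :=
  H e /\
  (forall a b, H a -> H b -> H (m a b)) /\
  (forall a, H a -> m e a = a /\ m a e = a) /\
  (forall a, H a -> exists b, H b /\ m a b = e /\ m b a = e).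

Definition is_subgroup (H : S -> Prop) : Prop := exists e, subgroup_with_id H e.

Definition maximal_subgroup (H : S -> Prop) : Prop :=
  is_subgroup H /\
  forall K : S -> Prop, is_subgroup K -> (forall a, H a -> K a) ->
    forall a, K a -> H a.

Definition eval_from (X : Type) (g : X -> S) (a : S) (w : seq X) : S :=
  foldl (fun b x => m b (g x)) a w.

(* g : X -> S induces a surjective morphism X^+ -> S. *)
Definition sgp_generates (X : Type) (g : X -> S) : Prop :=
  forall a, exists (x : X) (w : seq X), eval_from g (g x) w = a.

(* For a monoid with carrier V (a predicate on S) and identity e:
   g : X -> V induces a surjective monoid morphism X^* -> V. *)
Definition mon_generates (V : S -> Prop) (e : S) (X : Type) (g : X -> S) : Prop :=
  (forall x, V (g x)) /\ forall a, V a -> exists w : seq X, eval_from g e w = a.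

(* Paths in the loop automaton of a monoid with vertex set V and generator
   map g.  Letters: inl x = x,  inr x = \overline{x}.
   An edge a --x--> a(xg) and an edge a(xg) --\bar x--> a, for a in V. *)
Inductive lpath (V : S -> Prop) (X : Type) (g : X -> S) : S -> seq (X + X) -> S -> Prop :=
  | lpath_nil a : V a -> lpath V g a [::] a
  | lpath_fwd a x w b : V a -> lpath V g (m a (g x)) w b -> lpath V g a (inl x :: w) b
  | lpath_bwd a x w b : V a -> lpath V g a w b -> lpath V g (m a (g x)) (inr x :: w) b.

Definition monoid_loop_problem (V : S -> Prop) (e : S) (X : finType) (g : X -> S)
  : language (X + X)%type := fun w => lpath V g e w e.

Definition group_word_problem (e : S) (X : finType) (g : X -> S) : language X :=
  fun w => eval_from g e w = e.

End Semigroups.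

(* S^1: S with a new identity None adjoined. *)
Definition adjoin1 (S : Type) (m : S -> S -> S) (a b : option S) : option S :=
  match a, b with
  | None, _ => b
  | _, None => a
  | Some x, Some y => Some (m x y)
  end.

(* Loop problem of the semigroup S w.r.t. g : X -> S (generating S as a
   semigroup): loop problem of S^1 w.r.t. the extension X^* -> S^1. *)
Definition semigroup_loop_problem (S : Type) (m : S -> S -> S) (X : finType)
    (g : X -> S) : language (X + X)%type :=
  monoid_loop_problem (adjoin1 m) (fun _ => True) None (fun x => Some (g x)).

(* Main.v *)
Require Import Defs.
From mathcomp Require Import all_boot.
From Stdlib Require Import ClassicalEpsilon FunctionalExtensionality PropExtensionality.

Set Implicit Arguments. Unset Strict Implicit. Unset Printing Implicit Defensive.

Section CS.
Variables (S : Type) (m : S -> S -> S).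
Hypothesis Hassoc : associative_op m.
Local Infix "**" := m (at level 40, left associativity).

Lemma lft a b c : a ** b = c -> forall z, a ** (b ** z) = c ** z.
Proof. by move=> <- z; rewrite Hassoc. Qed.

Lemma simpl_ideal : no_proper_ideals m -> forall a b, exists x y, b = x ** (a ** y).
Proof.
move=> Hn a b; apply: (Hn (fun b => exists x y, b = x ** (a ** y))).
split; first by exists (a ** (a ** a)), a, a.
move=> s c [x [y ->]]; split.
  by exists (s ** x), y; rewrite Hassoc.
by exists x, (y ** s); rewrite -!Hassoc.
Qed.

Hypothesis Hcs : completely_simple m.

Let Hsimp := simpl_ideal (proj1 Hcs).

Lemma group_prim e : primitive_idempotent m e -> forall s,
  exists w, e ** w = w /\ w ** e = w /\ (e ** s ** e) ** w = e /\ w ** (e ** s ** e) = e.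
Proof.
move=> [Hee Hprim] s.
have [x [y Hxy]] := Hsimp (e ** s ** e) e.
set t := e ** s ** e in Hxy *.
have et : e ** t = t by rewrite /t !Hassoc Hee.
have te : t ** e = t by rewrite /t -!Hassoc Hee.
clearbody t.
set p := e ** x ** e; set q := e ** y ** e.
have Ept : e = p ** t ** q.
  rewrite /p /q -!Hassoc. rewrite (lft et) (lft te) (Hassoc t) (Hassoc x) -Hxy.
  by rewrite /Defs.idempotent in Hee; rewrite !Hee.
have pe : p ** e = p by rewrite /p -!Hassoc Hee.
have ep : e ** p = p by rewrite /p !Hassoc Hee.
have qe : q ** e = q by rewrite /q -!Hassoc Hee.
have eq_ : e ** q = q by rewrite /q !Hassoc Hee.
clearbody p q.
have f1 : t ** (q ** p) = e.
  apply: Hprim.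
  - rewrite /Defs.idempotent -!Hassoc.
    by rewrite (Hassoc t q p) (Hassoc p (t ** q) p) (Hassoc p t q) -Ept ep.
  - by rewrite Hassoc et.
  - by rewrite -!Hassoc pe.
have f2 : (q ** p) ** t = e.
  apply: Hprim.
  - rewrite /Defs.idempotent -!Hassoc.
    by rewrite (Hassoc t q (p ** t)) (Hassoc p (t ** q)) (Hassoc p t q) -Ept (Hassoc e p t) ep.
  - by rewrite !Hassoc eq_.
  - by rewrite -!Hassoc te.
exists (q ** p); split; first by rewrite Hassoc eq_.
split; first by rewrite -Hassoc pe.
by [].
Qed.

Lemma group_idem f : Defs.idempotent m f -> forall s,
  exists w, f ** w = w /\ w ** f = w /\ (f ** s ** f) ** w = f /\ w ** (f ** s ** f) = f.
Proof.
move=> Hff s.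
have [_ [e0 He0]] := Hcs.
have Hee0 : e0 ** e0 = e0 by case: He0.
have [x [y Hxy]] := Hsimp e0 f.
set x' := f ** x ** e0; set y' := e0 ** y ** f.
have Exy : f = x' ** y'.
  rewrite /x' /y' -!Hassoc (lft Hee0) (Hassoc e0 y f) (Hassoc x (e0 ** y) f) -Hxy.
  by rewrite /Defs.idempotent in Hff; rewrite !Hff.
have x'e : x' ** e0 = x' by rewrite /x' -!Hassoc Hee0.
have fx' : f ** x' = x' by rewrite /x' !Hassoc Hff.
have ey' : e0 ** y' = y' by rewrite /y' !Hassoc Hee0.
have y'f : y' ** f = y' by rewrite /y' -!Hassoc Hff.
have [w0 [_ [_ [Hw0 _]]]] := group_prim He0 (y ** f ** x).
have Eg : e0 ** (y ** f ** x) ** e0 = y' ** x' by rewrite /x' /y' -!Hassoc (lft Hff).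
rewrite Eg in Hw0.
clearbody x' y'.
have gg : (y' ** x') ** (y' ** x') = y' ** x'.
  by rewrite -!Hassoc (Hassoc x') -Exy (lft y'f).
have Hyx : y' ** x' = e0.
  have ge : (y' ** x') ** e0 = y' ** x' by rewrite -Hassoc x'e.
  by rewrite -ge -{1}Hw0 Hassoc gg Hw0.
set t := y' ** s ** x'.
have [w1 [ew1 [w1e [tw1 w1t]]]] := group_prim He0 t.
have Et : e0 ** t ** e0 = t by rewrite /t -!Hassoc x'e !Hassoc ey'.
rewrite Et in tw1 w1t.
have Efsf : f ** s ** f = x' ** t ** y' by rewrite /t Exy -!Hassoc.
clearbody t.
exists (x' ** w1 ** y'); rewrite Efsf; split; last split; last split.
- by rewrite Exy -!Hassoc (lft Hyx) (lft ew1).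
- by rewrite Exy -!Hassoc (lft Hyx) ey'.
- by rewrite Exy -!Hassoc (lft Hyx) (lft ew1) (lft tw1) (lft x'e).
- by rewrite Exy -!Hassoc (lft Hyx) (lft w1e) (lft w1t) (lft x'e).
Qed.

Lemma right_unit_e0 e0 Q : primitive_idempotent m e0 -> e0 ** Q = Q ->
  exists t, Q ** t = e0.
Proof.
move=> He0 HQ.
have Hee0 : e0 ** e0 = e0 by case: He0.
have [x [y Hxy]] := Hsimp Q e0.
have [v [ev [ve [uv vu]]]] := group_prim He0 x.
set uu := e0 ** x ** e0 in uv vu.
have E1 : e0 = uu ** (Q ** (y ** e0)).
  by rewrite /uu -!Hassoc (lft HQ) (Hassoc Q y e0) (Hassoc x (Q ** y) e0) -Hxy Hee0 Hee0.
have E2 : v = Q ** (y ** e0).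
  have -> : v = v ** e0 by rewrite ve.
  by rewrite {1}E1 Hassoc vu Hassoc HQ.
exists (y ** (e0 ** uu)).
by rewrite (Hassoc y e0 uu) (Hassoc Q (y ** e0) uu) -E2 vu.
Qed.

Lemma F2 c s : exists t, c ** (s ** t) = c.
Proof.
have [_ [e0 He0]] := Hcs.
have Hee0 : e0 ** e0 = e0 by case: He0.
have [p [q Hc]] := Hsimp e0 c.
have HQ : e0 ** (e0 ** q ** s) = e0 ** q ** s by rewrite -!Hassoc (lft Hee0).
have [t2 Ht2] := @right_unit_e0 e0 (e0 ** q ** s) He0 HQ.
exists (t2 ** (e0 ** q)).
rewrite Hc -!Hassoc.
have -> : q ** (s ** (t2 ** (e0 ** q))) = (q ** (s ** t2)) ** (e0 ** q) by rewrite -!Hassoc.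
rewrite -!Hassoc in Ht2.
by rewrite (Hassoc e0 (q ** (s ** t2))) Ht2 (lft Hee0).
Qed.
End CS.

Definition mop (S : Type) (m : S -> S -> S) := fun a b => m b a.

Lemma mop_assoc S (m : S -> S -> S) : associative_op m -> associative_op (mop m).
Proof. by move=> H a b c; rewrite /mop H. Qed.

Lemma mop_cs S (m : S -> S -> S) : completely_simple m -> completely_simple (mop m).
Proof.
move=> [Hn [e [He Hp]]]; split.
  move=> I [[a Ia] HI] b; apply: (Hn I); split; first by exists a.
  by move=> s c /(HI s) [].
exists e; split; first by [].
by move=> f Hf H1 H2; apply: Hp.
Qed.

Lemma F2dual S (m : S -> S -> S) : associative_op m -> completely_simple m ->
  forall c s, exists t, m t (m s c) = c.
Proof.
move=> Ha Hc c s.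
have [t Ht] := F2 (mop_assoc Ha) (mop_cs Hc) c s.
by exists t; rewrite Ha; exact Ht.
Qed.

Set Implicit Arguments. Unset Strict Implicit. Unset Printing Implicit Defensive.

Section Paths.
Variables (S : Type) (m : S -> S -> S) (V : S -> Prop) (X : Type) (g : X -> S).


Lemma lpath_inv_nil a b : lpath m V g a [::] b -> a = b /\ V a.
Proof. by move=> H; inversion H. Qed.

Lemma lpath_inv_l a x w b : lpath m V g a (inl x :: w) b -> V a /\ lpath m V g (m a (g x)) w b.
Proof. by move=> H; inversion H. Qed.

Lemma lpath_inv_r a x w b : lpath m V g a (inr x :: w) b ->
  exists a', a = m a' (g x) /\ V a' /\ lpath m V g a' w b.
Proof. by move=> H; inversion H; subst; exists a0. Qed.

Lemma lpath_cat a w1 b w2 c : lpath m V g a w1 b -> lpath m V g b w2 c ->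
  lpath m V g a (w1 ++ w2) c.
Proof.
elim=> {a w1 b} [a Va|a x w b Va _ IH|a x w b Va _ IH] H2 /=.
- by [].
- by apply: lpath_fwd => //; apply: IH.
- by apply: lpath_bwd => //; apply: IH.
Qed.

Lemma lpath_split (HV : forall a, V a) w1 w2 a c : lpath m V g a (w1 ++ w2) c ->
  exists b, lpath m V g a w1 b /\ lpath m V g b w2 c.
Proof.
elim: w1 a => [|[x|x] w1 IH] a /=.
- by move=> H; exists a; split => //; apply: lpath_nil.
- move=> /lpath_inv_l [Va /IH [b [H1 H2]]]; exists b; split => //.
  by apply: lpath_fwd.
- move=> /lpath_inv_r [a' [-> [Va' /IH [b [H1 H2]]]]]; exists b; split => //.
  by apply: lpath_bwd.
Qed.

End Paths.

Lemma eval_cons S (m : S -> S -> S) X (g : X -> S) a x w :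
  eval_from m g a (x :: w) = eval_from m g (m a (g x)) w.
Proof. by []. Qed.

Lemma eval_cat S (m : S -> S -> S) X (g : X -> S) a w1 w2 :
  eval_from m g a (w1 ++ w2) = eval_from m g (eval_from m g a w1) w2.
Proof. by rewrite /eval_from foldl_cat. Qed.

Lemma eval_mul S (m : S -> S -> S) (Ha : associative_op m) X (g : X -> S) a b w :
  eval_from m g (m a b) w = m a (eval_from m g b w).
Proof.
elim: w b => [|x w IH] b; first by [].
by rewrite !eval_cons -Ha IH.
Qed.

Section S1.
Variables (S : Type) (m : S -> S -> S) (X : Type) (g : X -> S).
Local Notation M1 := (adjoin1 m).
Local Notation G1 := (fun x => Some (g x)).
Local Notation LP := (lpath M1 (fun _ => True) G1).

Lemma eval_Some c u : eval_from M1 G1 (Some c) u = Some (eval_from m g c u).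
Proof. by elim: u c => [|x u IH] c; last rewrite !eval_cons /= IH. Qed.

Lemma LP_fwd u a b : LP a (map inl u) b <-> b = eval_from M1 G1 a u.
Proof.
elim: u a => [|x u IH] a /=.
  split; last by move=> ->; apply: lpath_nil.
  by move=> H; have [-> _] := lpath_inv_nil H.
split.
  by move=> H; have [_ /IH] := lpath_inv_l H.
by move=> Hb; apply: lpath_fwd => //; apply/IH.
Qed.

Lemma LP_bwd u a b : LP a (map inr (rev u)) b <-> a = eval_from M1 G1 b u.
Proof.
elim: u a b => [|x u IH] a b.
  split; last by move=> ->; apply: lpath_nil.
  by move=> H; have [-> _] := lpath_inv_nil H.
rewrite rev_cons -cats1 map_cat eval_cons; split.
  move=> H; have [c [/IH -> H2]] := lpath_split (fun _ => I) H.
  have [a' [-> [_ H3]]] := lpath_inv_r H2.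
  by have [-> _] := lpath_inv_nil H3.
move=> ->; apply: lpath_cat (_ : LP _ _ (M1 b (G1 x))) _.
  by apply/IH.
by apply: lpath_bwd => //; apply: lpath_nil.
Qed.

End S1.

Set Implicit Arguments. Unset Strict Implicit. Unset Printing Implicit Defensive.

Lemma lang_ext (X : finType) (L1 L2 : language X) : (forall w, L1 w <-> L2 w) -> L1 = L2.
Proof.
move=> H; apply: functional_extensionality => w.
by apply: propositional_extensionality.
Qed.

Lemma trans_acc_cons' (X Z Q : finType) (E : seq (Q * seq X * seq Z * Q)) fin q a b q' u v u' v' :
  (q, a, b, q') \in E -> trans_acc E fin q' u v -> u' = a ++ u -> v' = b ++ v ->
  trans_acc E fin q u' v'.
Proof. by move=> H1 H2 -> ->; apply: trans_acc_cons H1 H2. Qed.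

Section Hom.
Variables (X Z : finType) (pre suf : seq X) (f : Z -> seq X).

Definition hom_edges : seq (option bool * seq X * seq Z * option bool) :=
  [:: (None, pre, [::], Some false); (Some false, suf, [::], Some true)] ++
  [seq (Some false, f z, [:: z], Some false) | z <- enum Z].

Definition hom_fin : pred (option bool) := fun q => q == Some true.

Lemma hom_mem q a b q' : (q, a, b, q') \in hom_edges ->
  [\/ [/\ q = None, a = pre, b = [::] & q' = Some false],
      [/\ q = Some false, a = suf, b = [::] & q' = Some true] |
      exists z, [/\ q = Some false, a = f z, b = [:: z] & q' = Some false]].
Proof.
rewrite /hom_edges !inE => /orP [/eqP [-> -> -> ->]|/orP [/eqP [-> -> -> ->]|]].
- by constructor 1.
- by constructor 2.
- by move=> /mapP [z _ [-> -> -> ->]]; constructor 3; exists z.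
Qed.

Lemma hom_acc q u v : trans_acc hom_edges hom_fin q u v ->
  [/\ q = None -> u = pre ++ flatten (map f v) ++ suf,
      q = Some false -> u = flatten (map f v) ++ suf &
      q = Some true -> u = [::] /\ v = [::]].
Proof.
elim=> {q u v} [q /eqP ->|q a b q' u v /hom_mem H _ [IH1 IH2 IH3]].
  by split.
case: H => [[? ? ? ?]|[? ? ? ?]|[z [? ? ? ?]]]; subst; split => // _.
- by rewrite IH2.
- by have [-> ->] := IH3 erefl; rewrite cats0.
- by rewrite IH2 // catA.
Qed.

Lemma hom_rt : rational_transduction (fun u v => u = pre ++ flatten (map f v) ++ suf).
Proof.
exists (option bool : finType), hom_edges, None, hom_fin => u v; split.
  move=> ->; apply: (trans_acc_cons' (a := pre) (b := [::]) (q' := Some false)) => //.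
    by rewrite /hom_edges !inE eqxx.
  elim: v => [|z v IH] /=.
    apply: (trans_acc_cons' (a := suf) (b := [::]) (q' := Some true) (u := [::]) (v := [::])).
    - by rewrite /hom_edges !inE eqxx orbT.
    - by apply: trans_acc_nil.
    - by rewrite cats0.
    - by [].
  apply: (trans_acc_cons' (a := f z) (b := [:: z]) _ IH).
  - by rewrite /hom_edges mem_cat; apply/orP; right; apply/mapP; exists z => //; rewrite mem_enum.
  - by rewrite catA.
  - by [].
by move=> /hom_acc [H _ _]; apply: H.
Qed.

End Hom.

Set Implicit Arguments. Unset Strict Implicit. Unset Printing Implicit Defensive.

Section Grp.
Variables (S : Type) (m : S -> S -> S).
Hypothesis Hassoc : associative_op m.
Local Infix "**" := m (at level 40, left associativity).
Variables (Hg : S -> Prop) (e : S).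
Hypothesis Hsub : subgroup_with_id m Hg e.

Let He : Hg e := proj1 Hsub.
Let Hcl : forall a b, Hg a -> Hg b -> Hg (a ** b) := proj1 (proj2 Hsub).
Let Hid : forall a, Hg a -> e ** a = a /\ a ** e = a := proj1 (proj2 (proj2 Hsub)).
Let Hinv : forall a, Hg a -> exists b, Hg b /\ a ** b = e /\ b ** a = e := proj2 (proj2 (proj2 Hsub)).

Variables (Y : finType) (h : Y -> S).
Hypothesis Hh : forall y, Hg (h y).

Lemma LH_fwd v a b : Hg a -> lpath m Hg h a (map inl v) b <-> b = eval_from m h a v.
Proof.
elim: v a => [|y v IH] a Ha /=.
  split; last by move=> ->; apply: lpath_nil.
  by move=> H; have [-> _] := lpath_inv_nil H.
split.
  by move=> H; have [_ /IH H2] := lpath_inv_l H; apply: H2; apply: Hcl.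
by move=> Hb; apply: lpath_fwd => //; apply/IH => //; apply: Hcl.
Qed.

Lemma flatten_single (T : Type) (v : seq Y) (f : Y -> T) :
  flatten (map (fun y => [:: f y]) v) = map f v.
Proof. by elim: v => //= y v ->. Qed.

Lemma word_is_image :
  group_word_problem m e h =
  trans_image (fun u v => u = [::] ++ flatten (map (fun y => [:: (inl y : (Y + Y)%type)]) v) ++ [::])
     (monoid_loop_problem m Hg e h).
Proof.
apply: lang_ext => v; rewrite /trans_image /group_word_problem /monoid_loop_problem; split.
  move=> Hv; exists (map inl v); split; last by rewrite cats0 flatten_single.
  by apply/LH_fwd.
move=> [u [Hu Eu]]; subst u; move: Hu; rewrite cats0 flatten_single /=.
by move=> Hl; have [H1 _] := @LH_fwd v e e He; rewrite /= -(H1 Hl).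
Qed.

Variable inv : Y -> S.
Hypothesis Hinvy : forall y, Hg (inv y) /\ h y ** inv y = e /\ inv y ** h y = e.

Definition h2 (z : (Y + Y)%type) : S := match z with inl y => h y | inr y => inv y end.

Lemma Hh2 z : Hg (h2 z).
Proof. by case: z => y /=; [apply: Hh|case: (Hinvy y)]. Qed.

Lemma LH_h2 w a b : Hg a -> lpath m Hg h a w b <-> b = eval_from m h2 a w.
Proof.
elim: w a => [|[y|y] w IH] a Ha.
- split; last by move=> ->; apply: lpath_nil.
  by move=> H; have [-> _] := lpath_inv_nil H.
- rewrite eval_cons; split.
    by move=> H; have [_ /IH H2] := lpath_inv_l H; apply: H2; apply: Hcl.
  by move=> Hb; apply: lpath_fwd => //; apply/IH => //; apply: Hcl.
- have [Hiy [E1 E2]] := Hinvy y.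
  rewrite eval_cons; split.
    move=> H; have [a' [Ea [Ha' H2]]] := lpath_inv_r H.
    have -> : a ** h2 (inr y) = a' by rewrite Ea /= -Hassoc E1; case: (Hid Ha').
    by apply/IH.
  move=> Hb.
  have Ha' : Hg (a ** inv y) by apply: Hcl.
  have -> : a = (a ** inv y) ** h y by rewrite -Hassoc E2; case: (Hid Ha).
  by apply: lpath_bwd => //; apply/IH.
Qed.

Lemma loop_is_word : monoid_loop_problem m Hg e h = group_word_problem m e h2.
Proof.
apply: lang_ext => w; rewrite /monoid_loop_problem /group_word_problem.
move: (@LH_h2 w e e He) => [H1 H2]; split => Hx; [exact: esym (H1 Hx) | apply: H2; exact: esym Hx].
Qed.

End Grp.

Set Implicit Arguments. Unset Strict Implicit. Unset Printing Implicit Defensive.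

Section KS.
Variables (S : Type) (m : S -> S -> S).
Hypothesis Hassoc : associative_op m.
Hypothesis Hcs : completely_simple m.
Local Infix "**" := m (at level 40, left associativity).

Definition Kset (e : S) (a : S) : Prop := e ** a = a /\ a ** e = a.

Lemma K_sub e : e ** e = e -> subgroup_with_id m (Kset e) e.
Proof.
move=> Hee; split; first by [].
split; first by move=> a b [Ha1 Ha2] [Hb1 Hb2]; rewrite /Kset -Hassoc Hb2 Hassoc Ha1.
split; first by move=> a [].
move=> a [Ha1 Ha2].
have [w [w1 [w2 [w3 w4]]]] := group_idem Hassoc Hcs Hee a.
rewrite Ha1 Ha2 in w3 w4.
by exists w.
Qed.

Lemma K_max e : e ** e = e -> maximal_subgroup m (Kset e).
Proof.
move=> Hee; split; first by exists e; apply: K_sub.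
move=> K [e' [Ke' [Kcl [Kid Kinv]]]] HK a Ka.
have Ke : K e by apply: HK.
have [b [Kb [eb be]]] := Kinv e Ke.
have Ee : e' = e.
  have [H1 H2] := Kid e Ke.
  by rewrite -eb -{1}Hee -Hassoc eb H2.
by rewrite /Kset -Ee; case: (Kid a Ka).
Qed.

Lemma K_in_max Hg e : maximal_subgroup m Hg -> subgroup_with_id m Hg e ->
  forall a, Kset e a -> Hg a.
Proof.
move=> [_ Hmax] Hsub.
have Hee : e ** e = e by case: (proj1 (proj2 (proj2 Hsub)) e (proj1 Hsub)).
apply: Hmax; first by exists e; apply: K_sub.
by move=> a Ha; apply: (proj1 (proj2 (proj2 Hsub)) a Ha).
Qed.

Lemma R_cancel e c s : e ** (c ** s) = c ** s -> e ** c = c.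
Proof.
move=> H; have [t Ht] := F2 Hassoc Hcs c s.
by rewrite -{1}Ht (Hassoc c s t) (Hassoc e (c ** s) t) H -Hassoc Ht.
Qed.

Lemma L_cancel e c s : (s ** c) ** e = s ** c -> c ** e = c.
Proof.
move=> H; have [t Ht] := F2dual Hassoc Hcs c s.
by rewrite -{1}Ht -(Hassoc t (s ** c) e) H Ht.
Qed.

End KS.

Section OneTwo.
Variables (S : Type) (m : S -> S -> S).
Hypothesis Hassoc : associative_op m.
Hypothesis Hcs : completely_simple m.
Local Infix "**" := m (at level 40, left associativity).
Variables (X : finType) (g : X -> S).
Hypothesis Hgen : sgp_generates m g.
Local Notation M1 := (adjoin1 m).
Local Notation G1 := (fun x => Some (g x)).
Local Notation LP := (lpath M1 (fun _ => True) G1).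

Definition wd (a : S) : seq X :=
  let: exist xw _ := constructive_indefinite_description _ (Hgen a) in
  let: exist w _ := constructive_indefinite_description _ (proj2_sig (constructive_indefinite_description _ (Hgen a))) in
  xw :: w.

Lemma wdE a : exists x w, wd a = x :: w /\ eval_from m g (g x) w = a.
Proof.
rewrite /wd; case: (constructive_indefinite_description _ (Hgen a)) => x Hx /=.
case: (constructive_indefinite_description _ Hx) => w Hw.
by exists x, w.
Qed.

Lemma evalwd a s : eval_from M1 G1 a (wd s) = M1 a (Some s).
Proof.
have [x [w [-> Hs]]] := wdE s.
rewrite eval_cons; case: a => [c|] /=.
  by rewrite eval_Some eval_mul // Hs.
by rewrite eval_Some Hs.
Qed.

Variables (Hg : S -> Prop) (e : S).
Hypothesis Hmax : maximal_subgroup m Hg.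
Hypothesis Hsub : subgroup_with_id m Hg e.
Variables (Y : finType) (h : Y -> S).
Hypothesis Hmg : mon_generates m Hg e h.

Let Hid : forall a, Hg a -> e ** a = a /\ a ** e = a := proj1 (proj2 (proj2 Hsub)).
Let He : Hg e := proj1 Hsub.
Let Hee : e ** e = e := proj1 (Hid He).
Let KH := K_in_max Hassoc Hcs Hmax Hsub.
Let hK y : Kset m e (h y) := Hid (proj1 Hmg y).

Definition sig1 (z : (Y + Y)%type) : seq (X + X) :=
  match z with inl y => map inl (wd (h y)) | inr y => map inr (rev (wd (h y))) end.

Definition invS (a : option S) : Prop := a = None \/ exists c, a = Some c /\ e ** c = c.
Definition piS (a : option S) : S := if a is Some c then c ** e else e.

Lemma piS_K a : invS a -> Kset m e (piS a).
Proof.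
case=> [->|[c [-> Hc]]] /=; first by [].
by split; rewrite -?Hassoc ?Hee // Hassoc Hc.
Qed.

Lemma step_fwd a y : invS a -> invS (M1 a (Some (h y))) /\ piS (M1 a (Some (h y))) = piS a ** h y.
Proof.
have [hy1 hy2] := hK y.
case=> [->|[c [-> Hc]]] /=.
  by split; [right; exists (h y)|rewrite hy1 hy2].
split; first by right; exists (c ** h y); rewrite Hassoc Hc.
by rewrite -!Hassoc hy1 hy2.
Qed.

Lemma step_bwd a y : invS (M1 a (Some (h y))) -> invS a.
Proof.
case: a => [c|] /=; last by left.
case=> [//|[c' [[<-] Hc]]]; right; exists c; split => //.
by apply: (R_cancel Hassoc Hcs Hc).
Qed.

Lemma SH v a b : invS a -> LP a (flatten (map sig1 v)) b ->
  invS b /\ lpath m Hg h (piS a) v (piS b).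
Proof.
elim: v a => [|z v IH] a Ha /=.
  move=> H; have [<- _] := lpath_inv_nil H.
  by split => //; apply: lpath_nil; apply: KH; apply: piS_K.
move=> H; have [c [H1 H2]] := lpath_split (fun _ => I) H.
clear H; case: z H1 => y /= H1.
  move/LP_fwd: H1; rewrite evalwd => Ec; subst c.
  have [Hc Epi] := step_fwd y Ha.
  have [Hb Hp] := IH _ Hc H2.
  split => //; apply: lpath_fwd; first by apply: KH; apply: piS_K.
  by rewrite -Epi.
move/LP_bwd: H1; rewrite evalwd => Ea; subst a.
have Hc := step_bwd Ha.
have [_ Epi] := step_fwd y Hc.
have [Hb Hp] := IH _ Hc H2.
split => //; rewrite Epi; apply: lpath_bwd => //.
by apply: KH; apply: piS_K.
Qed.

Lemma HS v a b : lpath m Hg h a v b -> LP (Some a) (flatten (map sig1 v)) (Some b).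
Proof.
elim=> {a v b} [a Ha|a y v b Ha _ IH|a y v b Ha _ IH] /=.
- by apply: lpath_nil.
- apply: lpath_cat IH; apply/LP_fwd; by rewrite evalwd.
- apply: lpath_cat IH; apply/LP_bwd; by rewrite evalwd.
Qed.

Lemma LH_image :
  monoid_loop_problem m Hg e h =
  trans_image (fun u v => u = map inl (wd e) ++ flatten (map sig1 v) ++ map inr (rev (wd e)))
     (semigroup_loop_problem m g).
Proof.
apply: lang_ext => v; rewrite /trans_image /monoid_loop_problem /semigroup_loop_problem; split.
  move=> Hv; eexists; split; last by reflexivity.
  rewrite /monoid_loop_problem.
  apply: lpath_cat (_ : LP None _ (Some e)) _.
    by apply/LP_fwd; rewrite evalwd.
  apply: lpath_cat (_ : LP (Some e) _ (Some e)) _.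
    by apply: HS.
  by apply/LP_bwd; rewrite evalwd.
move=> [u [Hu Eu]]; subst u.
move: Hu; rewrite /monoid_loop_problem => H.
have [c1 [H1 H2]] := lpath_split (fun _ => I) H.
have [c2 [H3 H4]] := lpath_split (fun _ => I) H2.
move/LP_fwd: H1; rewrite evalwd /= => Ec1; subst c1.
move/LP_bwd: H4; rewrite evalwd /= => Ec2; subst c2.
have Hinv : invS (Some e) by right; exists e.
have [_ Hp] := SH Hinv H3.
by rewrite /= Hee in Hp.
Qed.

End OneTwo.

Set Implicit Arguments. Unset Strict Implicit. Unset Printing Implicit Defensive.

Definition decP (P : Prop) : bool := if excluded_middle_informative P then true else false.
Lemma decPT (P : Prop) : P -> decP P = true.
Proof. by rewrite /decP; case: excluded_middle_informative. Qed.
Lemma decPE (P : Prop) : decP P = true -> P.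
Proof. by rewrite /decP; case: excluded_middle_informative. Qed.

Section TwoOne.
Variables (S : Type) (m : S -> S -> S).
Hypothesis Hassoc : associative_op m.
Hypothesis Hcs : completely_simple m.
Local Infix "**" := m (at level 40, left associativity).
Variables (X : finType) (g : X -> S).
Hypothesis Hgen : sgp_generates m g.
Local Notation M1 := (adjoin1 m).
Local Notation G1 := (fun x => Some (g x)).
Local Notation LP := (lpath M1 (fun _ => True) G1).

Variables (e : S) (rr uu : X -> S).
Hypothesis Hee : e ** e = e.
Hypothesis Hr1 : forall x, e ** rr x = rr x.
Hypothesis Hr2 : forall x, g x ** (e ** rr x) = g x.
Hypothesis Hr3 : forall x, e ** rr x ** e = e.
Hypothesis Hu1 : forall x, uu x ** (e ** g x) = g x.
Hypothesis Hu2 : forall x, e ** uu x ** e = e.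

Let lft a b c : a ** b = c -> forall z, a ** (b ** z) = c ** z.
Proof. by move=> <- z; rewrite Hassoc. Qed.

Lemma re x : rr x ** e = e.
Proof. by rewrite -{1}Hr1 Hr3. Qed.

Definition Yt := ((X * X) + X)%type.
Definition hY (y : Yt) : S :=
  match y with inl (l, x) => e ** rr l ** g x ** e | inr x => e ** g x ** e end.
Definition phi c := e ** c ** e.
Definition Ist x1 l c := c ** (e ** rr l) = c /\ uu x1 ** (e ** c) = c.

Lemma phiK c : Kset m e (phi c).
Proof. by rewrite /phi /Kset; split; rewrite -!Hassoc ?Hee // (lft Hee). Qed.

Lemma hYK y : Kset m e (hY y).
Proof.
case: y => [[l x]|x] /=; rewrite /Kset; split; rewrite -!Hassoc ?Hee //;
  by rewrite (lft Hee).
Qed.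

Lemma P1 c l x : c ** (e ** rr l) = c -> phi (c ** g x) = phi c ** hY (inl (l, x)).
Proof.
move=> Hc; rewrite /phi /= -!Hassoc (lft Hee).
by rewrite (Hassoc c e (rr l ** (g x ** e))) (Hassoc (c ** e)) -(Hassoc c) Hc.
Qed.

Lemma P2 x1 l c x : Ist x1 l c -> Ist x1 x (c ** g x).
Proof.
move=> [_ H2]; split; first by rewrite -Hassoc Hr2.
by rewrite (Hassoc e c (g x)) (Hassoc (uu x1) (e ** c)) H2.
Qed.

Lemma P3 x1 mu l c x : Ist x1 mu (c ** g x) -> c ** (e ** rr l) = c ->
  Ist x1 l c /\ g x ** (e ** rr mu) = g x.
Proof.
move=> [H1 H2] Hc; split; last by apply: (L_cancel Hassoc Hcs H1).
split => //.
have [t Ht] := F2 Hassoc Hcs c (g x).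
by rewrite -{1}Ht (Hassoc c (g x) t) (Hassoc e (c ** g x) t) (Hassoc (uu x1) _ t) H2 -Hassoc Ht.
Qed.

Lemma last_letter c : exists l, c ** (e ** rr l) = c.
Proof.
have [x [w <-]] := Hgen c.
case/lastP: w => [|w y]; first by exists x; apply: Hr2.
exists y; rewrite /eval_from foldl_rcons -Hassoc Hr2 //.
Qed.

Definition Q := (bool + (X * X))%type.
Definition edge := (Q * seq (Yt + Yt) * seq (X + X) * Q)%type.

Definition edges_from (t : X * X * X * X) : seq edge :=
  let: (x1, mu, l, x) := t in
  [:: (inl false, [:: inl (inr x)], [:: inl x], inr (x, x));
      (inr (x1, mu), [:: inl (inl (mu, x))], [:: inl x], inr (x1, x))] ++
  (if decP (g x ** (e ** rr mu) = g x) then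
     [:: (inr (x1, mu), [:: inr (inl (l, x))], [:: inr x], inr (x1, l))] else [::]) ++
  (if decP (g x ** (e ** rr mu) = g x /\ uu x1 ** (e ** g x) = g x) then
     [:: (inr (x1, mu), [:: inr (inr x)], [:: inr x], inl true)] else [::]).

Definition Edges : seq edge := flatten [seq edges_from t | t <- enum ((X * X * X * X)%type : finType)].
Definition Qfin : pred Q := fun q => q == inl true.

Lemma Edges_intro t p : p \in edges_from t -> p \in Edges.
Proof. by move=> H; apply/flatten_mapP; exists t => //; rewrite mem_enum. Qed.

Lemma Edges_inv q a b q' : (q, a, b, q') \in Edges ->
  [\/ exists x, [/\ q = inl false, a = [:: inl (inr x)], b = [:: inl x] & q' = inr (x, x)],
      exists x1 mu x, [/\ q = inr (x1, mu), a = [:: inl (inl (mu, x))], b = [:: inl x] & q' = inr (x1, x)],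
      exists x1 mu l x, [/\ q = inr (x1, mu), a = [:: inr (inl (l, x))], b = [:: inr x], q' = inr (x1, l)
                           & g x ** (e ** rr mu) = g x] |
      exists x1 mu x, [/\ q = inr (x1, mu), a = [:: inr (inr x)], b = [:: inr x], q' = inl true
                           & g x ** (e ** rr mu) = g x /\ uu x1 ** (e ** g x) = g x]].
Proof.
move=> /flatten_mapP [[[[x1 mu] l] x] _].
rewrite /edges_from mem_cat => /orP [].
  rewrite !inE => /orP [/eqP [-> -> -> ->]|/eqP [-> -> -> ->]].
    by constructor 1; exists x.
  by constructor 2; exists x1, mu, x.
rewrite mem_cat => /orP [].
  case Hd: decP => //; rewrite inE => /eqP [-> -> -> ->].
  by constructor 3; exists x1, mu, l, x; split => //; apply: decPE Hd.
case Hd: decP => //; rewrite inE => /eqP [-> -> -> ->].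
by constructor 4; exists x1, mu, x; split => //; apply: decPE Hd.
Qed.

Definition LK := monoid_loop_problem m (Kset m e) e hY.
Definition rhoT (u : seq (Yt + Yt)) (v : seq (X + X)) := trans_acc Edges Qfin (inl false) u v.

Lemma rhoT_rat : rational_transduction rhoT.
Proof. by exists (Q : finType), Edges, (inl false), Qfin. Qed.

Lemma fin_acc u v : trans_acc Edges Qfin (inl true) u v -> u = [::] /\ v = [::].
Proof.
move=> H; inversion H; subst => //.
by case: (Edges_inv H0) => [[x [? _ _ _]]|[x1 [mu [x [? _ _ _]]]]|[x1 [mu [l [x [? _ _ _ _]]]]]|[x1 [mu [x [? _ _ _ _]]]]].
Qed.


Lemma Hu2z x z : e ** (uu x ** (e ** z)) = e ** z.
Proof. by rewrite (Hassoc (uu x) e z) (Hassoc e (uu x ** e) z) (Hassoc e (uu x) e) Hu2. Qed.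

Lemma phi_g x : phi (g x) = e ** hY (inr x).
Proof. by rewrite /phi /= -!Hassoc (lft Hee). Qed.

Lemma HS2 q u v : trans_acc Edges Qfin q u v ->
  (forall x1 l c, q = inr (x1, l) -> Ist x1 l c ->
     lpath m (Kset m e) hY (phi c) u e -> LP (Some c) v None) /\
  (q = inl false -> lpath m (Kset m e) hY e u e -> LP None v None).
Proof.
elim=> {q u v} [q Hq|q a b q' u v Hmem Hacc [IH1 IH2]].
  by split; [move=> x1 l c Eq|move=> Eq]; rewrite Eq in Hq.
case: (Edges_inv Hmem) => [[x [Eq Ea Eb Eq']]|[x1 [mu [x [Eq Ea Eb Eq']]]]|[x1 [mu [l [x [Eq Ea Eb Eq' Hc]]]]]|[x1 [mu [x [Eq Ea Eb Eq' [Hc1 Hc2]]]]]]; subst.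
- split; first by move=> ? ? ? E; discriminate E.
  move=> _ Hl /=.
  have [_ Hl2] := lpath_inv_l Hl.
  apply: lpath_fwd => //=.
  apply: (IH1 x x (g x) erefl); first exact: (conj (Hr2 x) (Hu1 x)).
  by rewrite phi_g.
- split; last by move=> E; discriminate E.
  move=> x1' l' c [<- <-] HI Hl /=.
  have [_ Hl2] := lpath_inv_l Hl.
  apply: lpath_fwd => //.
  apply: (IH1 x1 x (c ** g x)) => //; first exact: P2 HI.
  by rewrite (P1 (l := mu)) //; case: HI.
- split; last by move=> E; discriminate E.
  move=> x1' l' c [<- <-] [HI1 HI2] Hl /=.
  have [a' [Ea [[Ka1 Ka2] Hl2]]] := lpath_inv_r Hl.
  set c0 := uu x1 ** (a' ** rr l).
  have I1 : c0 ** (e ** rr l) = c0 by rewrite /c0 -!Hassoc (lft (re l)) Hr1.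
  have I2 : uu x1 ** (e ** c0) = c0.
    by rewrite /c0 -{1}Ka1 -!Hassoc Hu2z (lft Ka1).
  have I3 : phi c0 = a'.
    by rewrite /phi /c0 -!Hassoc re Ka2 -{1}Ka1 Hu2z Ka1.
  have Ec : c = uu x1 ** (phi c ** rr mu) by rewrite /phi -!Hassoc HI1 HI2.
  have Ec0 : c = c0 ** g x.
    by rewrite {1}Ec Ea /c0 /= -!Hassoc Hc (lft (Hr1 l)).
  rewrite Ec0; apply: (lpath_bwd (a := Some c0)) => //.
  by apply: (IH1 x1 l c0) => //; rewrite I3.
- split; last by move=> E; discriminate E.
  move=> x1' l' c [<- <-] [HI1 HI2] Hl /=.
  have [? ?] := fin_acc Hacc; subst u v.
  have [a' [Ea [_ Hl2]]] := lpath_inv_r Hl.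
  have [Ea' _] := lpath_inv_nil Hl2; subst a'.
  have Ec : c = uu x1 ** (phi c ** rr mu) by rewrite /phi -!Hassoc HI1 HI2.
  have -> : c = g x by rewrite Ec Ea /= -!Hassoc Hc1 (lft Hee) Hc2.
  by apply: (lpath_bwd (a := None)) => //; apply: lpath_nil.
Qed.

Lemma SH2 a w b : LP a w b -> forall x1 l c, a = Some c -> b = None -> Ist x1 l c ->
  exists p q v, [/\ w = p ++ q, trans_acc Edges Qfin (inr (x1, l)) v p,
                   lpath m (Kset m e) hY (phi c) v e & LP None q None].
Proof.
elim=> {a w b} [a _|a x w b _ Hw IH|a x w b _ Hw IH] x1 l c Ea Eb HI.
- by subst.
- subst a.
  have [p [q [v [-> Ht Hl Hq]]]] := IH x1 x (c ** g x) erefl Eb (P2 x HI).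
  exists (inl x :: p), q, (inl (inl (l, x)) :: v); split => //.
  + apply: (trans_acc_cons' (a := [:: inl (inl (l, x))]) (b := [:: inl x]) _ Ht) => //.
    apply: (Edges_intro (t := (x1, l, x, x))).
    by rewrite /edges_from !(mem_cat, inE) eqxx !orbT.
  + apply: lpath_fwd; first exact: phiK.
    by rewrite -P1 //; case: HI.
- subst b; case: a Ea Hw IH => [c0|] /= Ea Hw IH.
    case: Ea => Ec; subst c.
    have [l' Hl'] := last_letter c0.
    have [HI0 Hcond] := P3 HI Hl'.
    have [p [q [v [-> Ht Hl Hq]]]] := IH x1 l' c0 erefl erefl HI0.
    exists (inr x :: p), q, (inr (inl (l', x)) :: v); split => //.
    + apply: (trans_acc_cons' (a := [:: inr (inl (l', x))]) (b := [:: inr x]) _ Ht) => //.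
      apply: (Edges_intro (t := (x1, l, l', x))).
      by rewrite /edges_from (decPT Hcond) !(mem_cat, inE) eqxx !orbT.
    + rewrite (P1 (l := l')); last by case: HI0.
      by apply: lpath_bwd => //; apply: phiK.
  case: Ea => Ec; subst c.
  exists [:: inr x], w, [:: inr (inr x)]; split => //.
  + apply: (trans_acc_cons' (a := [:: inr (inr x)]) (b := [:: inr x]) (q' := inl true) (u := [::]) (v := [::])) => //.
    * apply: (Edges_intro (t := (x1, l, l, x))).
      have Hcond : g x ** (e ** rr l) = g x /\ uu x1 ** (e ** g x) = g x.
        by case: HI => H1 H2; split => //; rewrite -{2}H2 Hassoc.
      by rewrite /edges_from (decPT Hcond) !(mem_cat, inE) eqxx !orbT.
    * by apply: trans_acc_nil.
  + rewrite phi_g; apply: lpath_bwd; first exact: (conj Hee Hee).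
    by apply: lpath_nil; exact: (conj Hee Hee).
Qed.

Definition Lp := trans_image rhoT LK.

Lemma Lp_LS u : Lp u -> LP None u None.
Proof. by move=> [v [Hv Ht]]; apply: (proj2 (HS2 Ht)). Qed.

Lemma star_LS ws : (forall u, u \in ws -> Lp u) -> LP None (flatten ws) None.
Proof.
elim: ws => [|w ws IH] H /=; first by apply: lpath_nil.
apply: lpath_cat (_ : LP None w None) _.
  by apply: Lp_LS; apply: H; rewrite inE eqxx.
by apply: IH => u Hu; apply: H; rewrite inE Hu orbT.
Qed.

Lemma LS_star n w : size w < n -> LP None w None -> kleene_star Lp w.
Proof.
elim: n w => [//|n IH] w Hs Hw.
case: w Hs Hw => [|[x|x] w] Hs Hw.
- by exists [::].
- have [_ H1] := lpath_inv_l Hw.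
  have HI : Ist x x (g x) := conj (Hr2 x) (Hu1 x).
  have [p [q [v [Ew Ht Hl Hq]]]] := SH2 H1 erefl erefl HI.
  have Hsq : size q < n by move: Hs; rewrite Ew /= size_cat ltnS; exact: leq_ltn_trans (leq_addl _ _).
  have [ws [Hws Ews]] := IH q Hsq Hq.
  exists ((inl x :: p) :: ws); split; last by rewrite /= Ews Ew.
  move=> u; rewrite inE => /orP [/eqP ->|/Hws //].
  exists (inl (inr x) :: v); split.
    rewrite /LK /monoid_loop_problem.
    by apply: lpath_fwd; [exact: (conj Hee Hee)|rewrite -phi_g].
  apply: (trans_acc_cons' (a := [:: inl (inr x)]) (b := [:: inl x]) _ Ht) => //.
  apply: (Edges_intro (t := (x, x, x, x))).
  by rewrite /edges_from !(mem_cat, inE) eqxx.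
- have [a' [Ea _]] := lpath_inv_r Hw.
  by case: a' Ea.
Qed.

Lemma LS_eq : semigroup_loop_problem m g = kleene_star Lp.
Proof.
apply: lang_ext => w; split.
  by move=> Hw; apply: (LS_star (n := (size w).+1)).
by move=> [ws [Hws <-]]; apply: star_LS.
Qed.

Lemma hY_gen : mon_generates m (Kset m e) e hY.
Proof.
split; first exact: hYK.
move=> a [Ka1 Ka2].
have Hw : forall w c l, c ** (e ** rr l) = c ->
    exists v, eval_from m hY (phi c) v = phi (eval_from m g c w).
  elim=> [|x w IH] c l Hc; first by exists [::].
  have Hcx : c ** g x ** (e ** rr x) = c ** g x by rewrite -Hassoc Hr2.
  have [v Hv] := IH (c ** g x) x Hcx.
  exists ((inl (l, x) : Yt) :: v).
  by rewrite !eval_cons -P1.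
have [x [w Ea]] := Hgen a.
have [v Hv] := Hw w (g x) x (Hr2 x).
exists ((inr x : Yt) :: v).
rewrite eval_cons -phi_g Hv Ea /phi.
by rewrite Ka1 Ka2.
Qed.

End TwoOne.

Set Implicit Arguments. Unset Strict Implicit. Unset Printing Implicit Defensive.

Section Ex.
Variables (S : Type) (m : S -> S -> S).
Hypothesis Hassoc : associative_op m.
Hypothesis Hcs : completely_simple m.
Local Infix "**" := m (at level 40, left associativity).
Variables (e : S).
Hypothesis Hee : e ** e = e.

Lemma cancel_l s q : (e ** s ** e) ** q = e ** s ** e -> e ** q = q -> q = e.
Proof.
move=> H1 H2.
have [w [_ [_ [_ w4]]]] := group_idem Hassoc Hcs Hee s.
by rewrite -H2 -{1}w4 -Hassoc H1 w4.
Qed.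

Lemma cancel_r s q : q ** (e ** s ** e) = e ** s ** e -> q ** e = q -> q = e.
Proof.
move=> H1 H2.
have [w [_ [_ [w3 _]]]] := group_idem Hassoc Hcs Hee s.
by rewrite -H2 -{1}w3 Hassoc H1 w3.
Qed.

Variables (X : finType) (g : X -> S).

Lemma exists_r x : exists r, [/\ e ** r = r, g x ** (e ** r) = g x & e ** r ** e = e].
Proof.
have [t Ht] := F2 Hassoc Hcs (g x) e.
exists (e ** t); split.
- by rewrite Hassoc Hee.
- by rewrite (Hassoc e e t) Hee.
- rewrite (Hassoc e e t) Hee.
  apply: (cancel_l (s := g x)); last by rewrite !Hassoc Hee.
  by rewrite -!Hassoc (Hassoc e e) Hee (Hassoc e t e) (Hassoc (g x) (e ** t) e) Ht.
Qed.

Lemma exists_u x : exists u, u ** (e ** g x) = g x /\ e ** u ** e = e.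
Proof.
have [t Ht] := F2dual Hassoc Hcs (g x) e.
exists (t ** e); split.
- by rewrite -Hassoc (Hassoc e e) Hee.
- apply: (cancel_r (s := g x)); last by rewrite -!Hassoc !Hee.
  by rewrite -!Hassoc !(lft Hassoc Hee) (Hassoc e (g x) e) (Hassoc t (e ** g x) e) Ht.
Qed.
End Ex.


Theorem theorem5p6 (F : lang_family)
  (HFrat : closed_under_rational_transduction F)
  (HFstar : closed_under_kleene F)
  (S : Type) (m : S -> S -> S) (Hassoc : associative_op m)
  (Hcs : completely_simple m)
  (X : finType) (g : X -> S) (Hgen : sgp_generates m g) :
  [<-> F (X + X)%type (semigroup_loop_problem m g);
       forall H : S -> Prop, maximal_subgroup m H ->
         forall e : S, subgroup_with_id m H e ->
         forall (Y : finType) (h : Y -> S), mon_generates m H e h ->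
           F (Y + Y)%type (monoid_loop_problem m H e h);
       forall H : S -> Prop, maximal_subgroup m H ->
         forall e : S, subgroup_with_id m H e ->
         forall (Y : finType) (h : Y -> S), mon_generates m H e h ->
           F Y (group_word_problem m e h)].
Proof.
have two_one : (forall H : S -> Prop, maximal_subgroup m H ->
         forall e : S, subgroup_with_id m H e ->
         forall (Y : finType) (h : Y -> S), mon_generates m H e h ->
           F (Y + Y)%type (monoid_loop_problem m H e h)) ->
       F (X + X)%type (semigroup_loop_problem m g).
  move=> H2.
  have [_ [e [Hee _]]] := Hcs.
  pose rr x := proj1_sig (constructive_indefinite_description _ (exists_r Hassoc Hcs Hee g x)).
  pose uu x := proj1_sig (constructive_indefinite_description _ (exists_u Hassoc Hcs Hee g x)).
  have Hr x : [/\ m e (rr x) = rr x, m (g x) (m e (rr x)) = g x & m (m e (rr x)) e = e].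
    by rewrite /rr; case: constructive_indefinite_description.
  have Hu x : m (uu x) (m e (g x)) = g x /\ m (m e (uu x)) e = e.
    by rewrite /uu; case: constructive_indefinite_description.
  rewrite (LS_eq Hassoc Hcs Hgen (rr := rr) (uu := uu) Hee
            (fun x => let: And3 a _ _ := Hr x in a) (fun x => let: And3 _ a _ := Hr x in a)
            (fun x => let: And3 _ _ a := Hr x in a) (fun x => proj1 (Hu x)) (fun x => proj2 (Hu x))).
  apply: HFstar; apply: HFrat; first exact: rhoT_rat.
  apply: H2.
  - exact: K_max.
  - exact: K_sub.
  - by apply: hY_gen => // x; case: (Hr x).
have three_two : (forall H : S -> Prop, maximal_subgroup m H ->
         forall e : S, subgroup_with_id m H e ->
         forall (Y : finType) (h : Y -> S), mon_generates m H e h ->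
           F Y (group_word_problem m e h)) ->
       (forall H : S -> Prop, maximal_subgroup m H ->
         forall e : S, subgroup_with_id m H e ->
         forall (Y : finType) (h : Y -> S), mon_generates m H e h ->
           F (Y + Y)%type (monoid_loop_problem m H e h)).
  move=> H3 Hg Hmax e Hsub Y h [Hh Hgn].
  have Hex y : exists b, Hg b /\ m (h y) b = e /\ m b (h y) = e.
    exact: (proj2 (proj2 (proj2 Hsub))).
  pose inv y := proj1_sig (constructive_indefinite_description _ (Hex y)).
  have Hinv y : Hg (inv y) /\ m (h y) (inv y) = e /\ m (inv y) (h y) = e.
    by rewrite /inv; case: constructive_indefinite_description.
  rewrite (loop_is_word Hassoc Hsub Hh Hinv).
  apply: (H3 Hg Hmax e Hsub); split; first by case=> y /=; [exact: Hh|case: (Hinv y)].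
  move=> a Ha; have [w Hw] := Hgn a Ha.
  exists (map inl w); rewrite -Hw.
  have Hm : forall w b, eval_from m (h2 h inv) b (map inl w) = eval_from m h b w.
    by elim=> [|y w' IH] b //; apply: IH.
  exact: Hm.
tfae.
- move=> HL Hg Hmax e Hsub Y h Hmg.
  rewrite (LH_image Hassoc Hcs Hgen Hmax Hsub Hmg).
  by apply: HFrat HL; apply: hom_rt.
- move=> H2 Hg Hmax e Hsub Y h Hmg.
  rewrite (word_is_image Hsub (proj1 Hmg)).
  by apply: HFrat (H2 _ Hmax _ Hsub _ _ Hmg); apply: hom_rt.
- by move=> H3; apply: two_one; apply: three_two.
Qed.
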